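(* Let $d\ge 2$ and let $a=(a_1,\dots,a_d)\in\mathcal{UN}_d$. Then there exists a special symmetric Toeplitz matrix $T_{\alpha,\beta}$ (of size $d\times d$) which is a matrix associated to the sequence $a$. The constant $\alpha$ is uniquely determined. For $d=2$ there are two choices for $\beta$, namely $\beta$ or $-\beta$. If $d\ge3$, then $\beta$ is uniquely determined.
   Context: A polynomial in $\mathbb{R}[z]$ is hyperbolic if all its roots are real. A sequence $a\in\mathbb{R}^d$ is a Nuij sequence if for every hyperbolic $p\in\mathbb{R}[z]$ of degree $d$, $p_a(z,s):=p(z)+\sum_{k=1}^d a_k s^k p^{(k)}(z)$ is hyperbolic for all $s\in\mathbb{R}$. A Nuij sequence $a$ admits a universal determinantal representation if there exists a real symmetric $d\times d$ matrix $A_a$ such that for every monic hyperbolic polynomial $p(z)=(z+\lambda_1)\cdots(z+\lambda_d)$ of degree $d$ one has $p_a(z,s)=\det(zI+D+sA_a)$, where $D$ is the diagonal matrix with diagonal entries $\lambda_1,\dots,\lambda_d$ written in an arbitrary order (so $\det(zI+D)=p(z)$); such $A_a$ is called a matrix associated to $a$. $\mathcal{UN}_d$ is the set of Nuij sequences in $\mathbb{R}^d$ admitting a universal determinantal representation. For $\alpha,\beta\in\mathbb{R}$, the special symmetric Toeplitz matrix $T_{\alpha,\beta}$ is the matrix with all diagonal entries equal to $\alpha$ and all off-diagonal entries equal to $\beta$. *)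

(* Defs.v *)
From HB Require Import structures.
From mathcomp Require Import all_boot all_order all_algebra.
From mathcomp Require Import reals.
Set Implicit Arguments. Unset Strict Implicit. Unset Printing Implicit Defensive.
Import Order.TTheory GRing.Theory Num.Theory.
Local Open Scope ring_scope.

Definition hyperbolic (R : realType) (p : {poly R}) : Prop :=
  exists s : seq R, p = lead_coef p *: \prod_(x <- s) ('X - x%:P).

(* p_a(z,s) = p(z) + sum_{k=1}^d a_k s^k p^{(k)}(z), as a polynomial in z for
   fixed s.  The sequence a = (a_1,...,a_d) is a : 'I_d -> R with a_{k} = a (k-1). *)
Definition pa (R : realType) (d : nat) (a : 'I_d -> R) (p : {poly R}) (s : R)
  : {poly R} :=
  p + \sum_(i < d) (a i * s ^+ i.+1) *: p^`(i.+1).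

Definition nuij (R : realType) (d : nat) (a : 'I_d -> R) : Prop :=
  forall p : {poly R}, size p = d.+1 -> hyperbolic p ->
    forall s : R, hyperbolic (pa a p s).

Definition detzI (R : realType) (d : nat) (M : 'M[R]_d) : {poly R} :=
  \det ('X%:M + map_mx polyC M).

(* A is a matrix associated to a: real symmetric, and for every monic
   hyperbolic p = (z+l_1)...(z+l_d) and every ordering of the l_i
   (captured by quantifying over all l : 'I_d -> R),
   p_a(z,s) = det(zI + diag(l) + s A) for all s. *)
Definition associated (R : realType) (d : nat) (a : 'I_d -> R) (A : 'M[R]_d)
  : Prop :=
  A^T = A /\
  forall (l : 'I_d -> R) (s : R),
    pa a (\prod_(i < d) ('X + (l i)%:P)) s
    = detzI (diag_mx (\row_i l i) + s *: A).

Definition UN (R : realType) (d : nat) (a : 'I_d -> R) : Prop :=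
  nuij a /\ exists A : 'M[R]_d, associated a A.

Definition toeplitz (R : realType) (d : nat) (alpha beta : R) : 'M[R]_d :=
  \matrix_(i, j) (if i == j then alpha else beta).

(* Main.v *)
Require Import Defs.
From HB Require Import structures.
From mathcomp Require Import all_boot all_order all_algebra.
From mathcomp Require Import reals.
From mathcomp Require Import fingroup perm action primitive_action alt.
From mathcomp Require Import ring lra.
Import Order.TTheory GRing.Theory Num.Theory.
Local Open Scope ring_scope.
Set Implicit Arguments. Unset Strict Implicit. Unset Printing Implicit Defensive.

Lemma cof_add (R : comNzRingType) n (B : 'M[R]_n) i c :
  \det (B + c *: delta_mx i i) = \det B + c * cofactor B i i.
Proof.
rewrite (expand_det_row _ i) (expand_det_row B i).
have Ec j : cofactor (B + c *: delta_mx i i) i j = cofactor B i j.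
  rewrite /cofactor; congr (_ * \det _); apply/matrixP => x y; rewrite !mxE.
  by rewrite eq_sym (negbTE (neq_lift i x)) /= mulr0 addr0.
under eq_bigr do rewrite Ec !mxE eqxx /= mulrDl.
rewrite big_split /=; congr (_ + _).
rewrite (bigD1 i) //= eqxx mulr1 big1 ?addr0 // => j /negbTE; rewrite eq_sym => ->.
by rewrite mulr0 mul0r.
Qed.

Definition Gd (R : comNzRingType) n (M : 'M[R]_n) (l : 'I_n -> R) :=
  \det (diag_mx (\row_i l i) + M).
Definition Feq (R : comNzRingType) n (M N : 'M[R]_n) := forall l, Gd M l = Gd N l.

Lemma Feq_del (R : comNzRingType) n (M N : 'M[R]_n.+1) :
  Feq M N -> Feq (row' ord_max (col' ord_max M)) (row' ord_max (col' ord_max N)).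
Proof.
move=> H l'.
pose l (c : R) j := if unlift ord_max j is Some j' then l' j' else c.
have E1 (P : 'M[R]_n.+1) : Gd P (l 1) = Gd P (l 0) + cofactor (diag_mx (\row_i l 0 i) + P) ord_max ord_max.
  rewrite /Gd -[cofactor _ _ _]mul1r -cof_add; congr (\det _).
  apply/matrixP => x y; rewrite !mxE /l.
  have nl z : (lift ord_max z == ord_max) = false.
    by rewrite eq_sym (negbTE (neq_lift _ _)).
  case: (unliftP ord_max x) => [x'|] ->; case: (unliftP ord_max y) => [y'|] ->.
  - by rewrite nl /= mul1r mulr0n addr0.
  - by rewrite nl /= mul1r mulr0n addr0.
  - by rewrite [ord_max == _]eq_sym nl /= mul1r andbF mulr0n !add0r addr0.
  - by rewrite eqxx /= mul1r add0r addrC.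
have E2 (P : 'M[R]_n.+1) : cofactor (diag_mx (\row_i l 0 i) + P) ord_max ord_max
    = Gd (row' ord_max (col' ord_max P)) l'.
  rewrite /cofactor addnn -signr_odd odd_double expr0 mul1r /Gd; congr (\det _).
  apply/matrixP => x y; rewrite !mxE /l !liftK (inj_eq (@lift_inj _ _)).
  done.
have := H (l 1); rewrite !E1 H -!E2.
by move/addrI.
Qed.

Definition lead (R : comNzRingType) n k (h : (k <= n)%N) (M : 'M[R]_n) : 'M[R]_k :=
  \matrix_(i, j) M (widen_ord h i) (widen_ord h j).

Lemma Feq_lead (R : comNzRingType) n (M N : 'M[R]_n) k (h : (k <= n)%N) :
  Feq M N -> Feq (lead h M) (lead h N).
Proof.
elim: n M N k h => [|n IH] M N k h H.
  have e : k = 0%N by apply/eqP; rewrite -leqn0.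
  subst k.
  have -> : lead h M = lead h N by apply/matrixP => -[].
  by [].
case: (ltngtP k n.+1) => [lt|gt|e]; last 2 first.
- by have := leq_trans gt h; rewrite ltnn.
- subst k.
  have -> : lead h M = M by apply/matrixP => x y; rewrite mxE; congr (M _ _); apply/val_inj.
  have -> : lead h N = N by apply/matrixP => x y; rewrite mxE; congr (N _ _); apply/val_inj.
  by [].
have h' : (k <= n)%N by [].
have E (P : 'M[R]_n.+1) : lead h P = lead h' (row' ord_max (col' ord_max P)).
  apply/matrixP => x y; rewrite !mxE; congr (P _ _); apply/val_inj => /=.
  - by rewrite /bump leqNgt (leq_trans (ltn_ord x) h').
  - by rewrite /bump leqNgt (leq_trans (ltn_ord y) h').
rewrite !E; apply: IH; exact: Feq_del.
Qed.
Lemma det2 (R : comNzRingType) (B : 'M[R]_2) (g : nat -> nat -> R) :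
  (forall x y : 'I_2, B x y = g x y) ->
  \det B = g 0%N 0%N * g 1%N 1%N - g 0%N 1%N * g 1%N 0%N.
Proof.
move=> HB; have -> : B = \matrix_(i, j) g i j by apply/matrixP => x y; rewrite mxE HB.
rewrite (expand_det_row _ 0) !big_ord_recl big_ord0 /cofactor !det_mx11 !mxE /=.
rewrite /bump /= !addn0 add0n expr0 expr1 addr0; ring.
Qed.

Lemma det2' (R : comNzRingType) (B : 'M[R]_2) :
  \det B = B 0 0 * B 1 1 - B 0 1 * B 1 0.
Proof.
rewrite (@det2 _ _ (fun x y => B (inord x) (inord y))); last by move=> x y; rewrite !inord_val.
have E0 : inord 0 = 0 :> 'I_2 by apply/val_inj; rewrite /= inordK.
have E1 : inord 1 = 1 :> 'I_2 by apply/val_inj; rewrite /= inordK.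
by rewrite E0 E1.
Qed.

Lemma det3 (R : comNzRingType) (B : 'M[R]_3) (g : nat -> nat -> R) :
  (forall x y : 'I_3, B x y = g x y) -> \det B =
  g 0%N 0%N * (g 1%N 1%N * g 2%N 2%N - g 1%N 2%N * g 2%N 1%N) - g 0%N 1%N * (g 1%N 0%N * g 2%N 2%N - g 1%N 2%N * g 2%N 0%N)
  + g 0%N 2%N * (g 1%N 0%N * g 2%N 1%N - g 1%N 1%N * g 2%N 0%N).
Proof.
move=> HB; have -> : B = \matrix_(i, j) g i j by apply/matrixP => x y; rewrite mxE HB.
rewrite (expand_det_row _ 0) !big_ord_recl big_ord0 /cofactor !det2' !mxE /=.
rewrite /bump /= !addn0 !add0n.
rewrite (_ : (1 + 1 %% 2)%N = 2%N) // expr0 expr1 addr0.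
ring.
Qed.
Lemma permk n m (t1 t2 : m.-tuple 'I_n) : (m <= n)%N -> uniq t1 -> uniq t2 ->
  exists s : 'S_n, map s t1 = t2.
Proof.
move=> mn u1 u2.
have tr := ntransitive_weak (m:=#|'I_n|) (k:=m) (G:='Sym_('I_n)) (S:=setT) (to:='P).
rewrite {1}card_ord in tr; have {tr} := tr mn (Sym_trans _).
move=> tr.
have d1 : t1 \in m.-dtuple(setT) by rewrite inE u1; apply/subsetP=> x; rewrite inE.
have d2 : t2 \in m.-dtuple(setT) by rewrite inE u2; apply/subsetP=> x; rewrite inE.
have [s _ e] := atransP2 tr d1 d2.
exists s; rewrite e /=; apply: eq_map => x; by rewrite apermE.
Qed.

Lemma perm_ext n m (h : (m <= n)%N) (t : m.-tuple 'I_n) : uniq t ->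
  exists s : 'S_n, forall x : 'I_m, s (widen_ord h x) = tnth t x.
Proof.
move=> ut.
pose t1 := [tuple widen_ord h x | x < m].
have u1 : uniq t1.
  rewrite /t1 /= map_inj_uniq ?enum_uniq // => x y /(congr1 val) /= e; exact: val_inj.
have [s e] := permk h u1 ut.
exists s => x.
have E : t = map_tuple s t1 by apply/val_inj; rewrite /= e.
by rewrite E tnth_map tnth_mktuple.
Qed.

Definition pmx (R : comNzRingType) n (s : 'S_n) (M : 'M[R]_n) : 'M[R]_n :=
  \matrix_(i, j) M (s i) (s j).

Lemma det_pmx (R : comNzRingType) n (s : 'S_n) (B : 'M[R]_n) : \det (pmx s B) = \det B.
Proof.
have -> : pmx s B = row_perm s (col_perm s B) by apply/matrixP => i j; rewrite !mxE.
rewrite row_permE col_permE !det_mulmx !det_perm odd_permV.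
by rewrite mulrC -mulrA -expr2 sqrr_sign mulr1.
Qed.

Lemma Gd_perm (R : comNzRingType) n (s : 'S_n) (M : 'M[R]_n) l :
  Gd (pmx s M) l = Gd M (fun i => l ((s^-1)%g i)).
Proof.
rewrite /Gd -[in RHS](det_pmx s); congr (\det _); apply/matrixP => i j; rewrite !mxE.
by rewrite permK (inj_eq (@perm_inj _ s)).
Qed.

Lemma Gd0 (R : comNzRingType) n (M : 'M[R]_n) : Gd M (fun=> 0) = \det M.
Proof.
rewrite /Gd; congr (\det _); apply/matrixP => i j; rewrite !mxE mul0rn add0r //.
Qed.

Lemma detzI0 (R : realType) n (M : 'M[R]_n) : (detzI M).[0] = \det M.
Proof.
rewrite /detzI -horner_evalE -det_map_mx; congr (\det _).
apply/matrixP => i j; rewrite !mxE /= horner_evalE hornerD hornerC hornerMn hornerX.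
by rewrite mul0rn add0r.
Qed.

Lemma Gd_assoc (R : realType) d (a : 'I_d -> R) (A : 'M[R]_d) l :
  associated a A -> Gd A l = (pa a (\prod_(i < d) ('X + (l i)%:P)) 1).[0].
Proof.
by case=> _ H; rewrite H scale1r detzI0.
Qed.

Lemma Feq_assoc (R : realType) d (a : 'I_d -> R) (A B : 'M[R]_d) :
  associated a A -> associated a B -> Feq A B.
Proof. by move=> HA HB l; rewrite (Gd_assoc l HA) (Gd_assoc l HB). Qed.

Lemma Feq_perm (R : realType) d (a : 'I_d -> R) (A : 'M[R]_d) (s : 'S_d) :
  associated a A -> Feq A (pmx s A).
Proof.
move=> HA l; rewrite Gd_perm !(Gd_assoc _ HA); congr ((pa a _ 1).[0]).
by rewrite (reindex_inj (@perm_inj _ (s^-1)%g)).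
Qed.

Lemma assoc_sim (R : realType) d (a : 'I_d -> R) (A B : 'M[R]_d) (e : 'I_d -> R) :
  associated a A -> (forall i, e i * e i = 1) -> B^T = B ->
  (forall i j, A i j = e i * e j * B i j) -> associated a B.
Proof.
move=> [_ HA] He HBt HAB; split => // l s; rewrite HA /detzI.
pose S : 'M[{poly R}]_d := diag_mx (\row_i (e i)%:P).
have SS : S *m S = 1%:M.
  apply/matrixP => i j; rewrite mul_diag_mx !mxE mulrnAr -polyCM He polyC1.
  by case: (i == j).
have -> : ('X%:M + map_mx polyC (diag_mx (\row_i l i) + s *: A)) =
   S *m ('X%:M + map_mx polyC (diag_mx (\row_i l i) + s *: B)) *m S.
  apply/matrixP => i j; rewrite mul_mx_diag mul_diag_mx !mxE HAB.
  case: (eqVneq i j) => [<-|nij].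
    rewrite !mulr1n.
    have E : (e i)%:P * ('X + (l i + s * B i i)%:P) * (e i)%:P
      = (e i * e i)%:P * ('X + (l i + s * B i i)%:P) by rewrite polyCM; ring.
    by rewrite E He mul1r mul1r.
  rewrite !mulr0n !add0r !polyCM; ring.
rewrite !det_mulmx mulrC mulrA -det_mulmx SS det1 mul1r //.
Qed.

Lemma lead_det (R : comNzRingType) n (M N : 'M[R]_n) k (h : (k <= n)%N) :
  Feq M N -> \det (lead h M) = \det (lead h N).
Proof. by move=> H; rewrite -!Gd0; apply: Feq_lead. Qed.

Lemma minor_inv (R : realType) d (a : 'I_d -> R) (A : 'M[R]_d) k (h : (k <= d)%N)
  (t t' : k.-tuple 'I_d) : associated a A -> uniq t -> uniq t' ->
  \det (\matrix_(x, y) A (tnth t x) (tnth t y)) =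
  \det (\matrix_(x, y) A (tnth t' x) (tnth t' y)).
Proof.
move=> HA ut ut'.
have mk (u : k.-tuple 'I_d) : uniq u ->
    \det (\matrix_(x, y) A (tnth u x) (tnth u y)) = \det (lead h A).
  move=> uu; have [s Hs] := perm_ext h uu.
  have -> : \matrix_(x, y) A (tnth u x) (tnth u y) = lead h (pmx s A).
    by apply/matrixP => x y; rewrite !mxE !Hs.
  symmetry; apply: lead_det; exact: Feq_perm HA.
by rewrite !mk.
Qed.

Lemma tr_toeplitz (R : realType) d (al be : R) : (toeplitz d al be)^T = toeplitz d al be.
Proof. by apply/matrixP => i j; rewrite !mxE eq_sym. Qed.

Lemma lead_toep (R : realType) d (al be : R) k (h : (k <= d)%N) (x y : 'I_k) :
  lead h (toeplitz d al be) x y = (fun x y : nat => if x == y then al else be) x y.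
Proof. by rewrite !mxE. Qed.

Lemma det3E (R : realType) (al b : R) (g : nat -> nat -> R) :
  g 0%N 0%N = al -> g 1%N 1%N = al -> g 2%N 2%N = al ->
  g 1%N 0%N = g 0%N 1%N -> g 2%N 0%N = g 0%N 2%N -> g 2%N 1%N = g 1%N 2%N ->
  g 0%N 1%N * g 0%N 1%N = b * b -> g 0%N 2%N * g 0%N 2%N = b * b ->
  g 1%N 2%N * g 1%N 2%N = b * b ->
  g 0%N 0%N * (g 1%N 1%N * g 2%N 2%N - g 1%N 2%N * g 2%N 1%N) - g 0%N 1%N * (g 1%N 0%N * g 2%N 2%N - g 1%N 2%N * g 2%N 0%N)
  + g 0%N 2%N * (g 1%N 0%N * g 2%N 1%N - g 1%N 1%N * g 2%N 0%N) =
  al * al * al - 3 * al * (b * b) + 2 * (g 0%N 1%N * g 1%N 2%N * g 0%N 2%N).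
Proof.
move=> h0 h1 h2 s1 s2 s3 q1 q2 q3; rewrite h0 h1 h2 s1 s2 s3.
transitivity (al * al * al - al * (g 0%N 1%N * g 0%N 1%N) - al * (g 0%N 2%N * g 0%N 2%N)
  - al * (g 1%N 2%N * g 1%N 2%N) + 2 * (g 0%N 1%N * g 1%N 2%N * g 0%N 2%N)); first by ring.
rewrite q1 q2 q3; ring.
Qed.

Lemma mx_tup (R : realType) d (A : 'M[R]_d) k (t : k.-tuple 'I_d) (z : 'I_d) (x y : 'I_k) :
  (\matrix_(x, y) A (tnth t x) (tnth t y)) x y = A (nth z t x) (nth z t y).
Proof. by rewrite mxE !(tnth_nth z). Qed.

Lemma det2_tup (R : realType) d (A : 'M[R]_d) (t : 2.-tuple 'I_d) (z : 'I_d) :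
  let g := fun x y : nat => A (nth z t x) (nth z t y) in
  \det (\matrix_(x, y) A (tnth t x) (tnth t y)) = g 0%N 0%N * g 1%N 1%N - g 0%N 1%N * g 1%N 0%N.
Proof. by move=> g; apply: det2 => x y; rewrite (mx_tup _ _ z). Qed.

Lemma det3_tup (R : realType) d (A : 'M[R]_d) (t : 3.-tuple 'I_d) (z : 'I_d) :
  let g := fun x y : nat => A (nth z t x) (nth z t y) in
  \det (\matrix_(x, y) A (tnth t x) (tnth t y)) =
  g 0%N 0%N * (g 1%N 1%N * g 2%N 2%N - g 1%N 2%N * g 2%N 1%N) - g 0%N 1%N * (g 1%N 0%N * g 2%N 2%N - g 1%N 2%N * g 2%N 0%N)
  + g 0%N 2%N * (g 1%N 0%N * g 2%N 1%N - g 1%N 1%N * g 2%N 0%N).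
Proof. by move=> g; apply: det3 => x y; rewrite (mx_tup _ _ z). Qed.

Theorem proposition3p2 (R : realType) (d : nat) (a : 'I_d -> R) :
  (2 <= d)%N -> UN a ->
  (exists alpha beta : R, associated a (toeplitz d alpha beta)) /\
  (forall alpha beta alpha' beta' : R,
      associated a (toeplitz d alpha beta) ->
      associated a (toeplitz d alpha' beta') -> alpha' = alpha) /\
  (d = 2%N -> forall alpha beta : R,
      associated a (toeplitz d alpha beta) ->
      associated a (toeplitz d alpha (- beta)) /\
      (forall beta' : R, associated a (toeplitz d alpha beta') ->
                         beta' = beta \/ beta' = - beta)) /\
  ((3 <= d)%N -> forall alpha beta alpha' beta' : R,
      associated a (toeplitz d alpha beta) ->
      associated a (toeplitz d alpha' beta') -> beta' = beta).
Proof.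
move=> hd [_ [A HA]].
have h1 : (1 <= d)%N by exact: leq_trans hd.
pose w0 : 'I_d := Ordinal h1.
pose w1 : 'I_d := Ordinal hd.
have T1 (al be : R) : \det (lead h1 (toeplitz d al be)) = al.
  by rewrite det_mx11 !mxE eqxx.
have T2 (al be : R) : \det (lead hd (toeplitz d al be)) = al * al - be * be.
  by rewrite (det2 (lead_toep al be hd)).
have T3 (h3 : (3 <= d)%N) (al be : R) : \det (lead h3 (toeplitz d al be)) =
    al * (al * al - be * be) - be * (be * al - be * be) + be * (be * be - al * be).
  by rewrite (det3 (lead_toep al be h3)).
have Ual (al be al' be' : R) : associated a (toeplitz d al be) ->
    associated a (toeplitz d al' be') -> al' = al.
  by move=> H H'; have := lead_det h1 (Feq_assoc H H'); rewrite !T1.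
have Ube2 (al be al' be' : R) : associated a (toeplitz d al be) ->
    associated a (toeplitz d al' be') -> be' * be' = be * be.
  move=> H H'; have e := Ual _ _ _ _ H H'; subst al'.
  have := lead_det hd (Feq_assoc H H'); rewrite !T2 => /addrI /oppr_inj //.
have Ube3 (h3 : (3 <= d)%N) (al be al' be' : R) : associated a (toeplitz d al be) ->
    associated a (toeplitz d al' be') -> be' = be.
  move=> H H'; have q := Ube2 _ _ _ _ H H'.
  have e := Ual _ _ _ _ H H'; subst al'.
  have := lead_det h3 (Feq_assoc H H'); rewrite !T3 => E.
  have c : be' * (be * be) = be * (be * be).
    have : 2 * (be' * (be' * be') - be * (be * be)) = 0.
      transitivity ((al * (al * al - be' * be') - be' * (be' * al - be' * be') + be' * (be' * be' - al * be'))
        - (al * (al * al - be * be) - be * (be * al - be * be) + be * (be * be - al * be))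
        + 3 * al * (be' * be' - be * be)); first by ring.
      by rewrite E q !subrr mulr0 addr0.
    move/eqP; rewrite mulf_eq0 pnatr_eq0 /= subr_eq0 => /eqP.
    by rewrite q.
  case: (eqVneq be 0) => [z|nz].
    by subst be; move/eqP: q; rewrite mulr0 mulf_eq0 orbb => /eqP.
  by apply: (mulIf _ c); rewrite mulf_neq0.
split; last split; [|exact: Ual|split].
- have [At _] := HA.
  have Asym i j : A j i = A i j by rewrite -[in LHS]At mxE.
  pose al := A w0 w0; pose b := A w0 w1.
  have Fdiag i : A i i = al.
    have := minor_inv h1 (t := [tuple i]) (t' := [tuple w0]) HA (isT) (isT).
    by rewrite !det_mx11 !(mx_tup _ _ i) /=.
  have Fsq i j : i != j -> A i j * A i j = b * b.
    move=> nij.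
    have u : uniq [tuple i; j] by rewrite /= inE nij.
    have := minor_inv hd (t := [tuple i; j]) (t' := [tuple w0; w1]) HA u (isT).
    rewrite !(det2_tup _ _ i) /= !Fdiag (Asym i j) (Asym w0 w1).
    by move/addrI/oppr_inj.
  have := hd; rewrite leq_eqVlt => /orP [/eqP e2|h3].
  + exists al, b.
    apply: (assoc_sim (e := fun=> 1) HA); first by move=> ?; rewrite mulr1.
      exact: tr_toeplitz.
    move=> i j; rewrite mul1r mul1r mxE; case: (eqVneq i j) => [<-|nij]; first exact: Fdiag.
    have : (i == w0) && (j == w1) || (i == w1) && (j == w0).
      have vi : (val i < 2)%N by rewrite [2%N]e2; exact: ltn_ord.
      have vj : (val j < 2)%N by rewrite [2%N]e2; exact: ltn_ord.
      move: vi vj nij; rewrite -!val_eqE /=.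
      by case: (val i) => [|[|?]] //; case: (val j) => [|[|?]].
    by case/orP => /andP [/eqP -> /eqP ->] //; rewrite Asym.
  + pose w2 : 'I_d := Ordinal h3.
    have key (t : 3.-tuple 'I_d) : uniq t ->
        \det (\matrix_(x, y) A (tnth t x) (tnth t y)) = al * al * al - 3 * al * (b * b)
        + 2 * (A (nth w0 t 0%N) (nth w0 t 1%N) * A (nth w0 t 1%N) (nth w0 t 2%N)
               * A (nth w0 t 0%N) (nth w0 t 2%N)).
      move=> ut; rewrite (det3_tup _ _ w0).
      apply: (det3E (g := fun x y : nat => A (nth w0 t x) (nth w0 t y))) => /=;
        first [exact: Fdiag | exact: Asym | (apply: Fsq; by rewrite nth_uniq ?size_tuple)].
    pose c := A w0 w1 * A w1 w2 * A w0 w2.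
    have F3 i j : uniq [:: w0; i; j] -> A w0 i * A i j * A w0 j = c.
      move=> u.
      have := minor_inv h3 (t := [tuple w0; i; j]) (t' := [tuple w0; w1; w2]) HA u isT.
      rewrite !key //= => /addrI /(mulfI _); apply.
      by rewrite pnatr_eq0.
    have n01 : w0 != w1 by [].
    have n02 : w0 != w2 by [].
    have n12 : w1 != w2 by [].
    case: (eqVneq b 0) => [b0|bn0].
      exists al, 0.
      apply: (assoc_sim (e := fun=> 1) HA); first by move=> ?; rewrite mulr1.
        exact: tr_toeplitz.
      move=> i j; rewrite mul1r mul1r mxE; case: (eqVneq i j) => [<-|nij]; first exact: Fdiag.
      by move/eqP: (Fsq _ _ nij); rewrite b0 mulr0 mulf_eq0 orbb => /eqP.
    have bb : b * b != 0 by rewrite mulf_neq0.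
    have cc : c * c = b * b * (b * b * (b * b)).
      transitivity ((A w0 w1 * A w0 w1) * (A w1 w2 * A w1 w2) * (A w0 w2 * A w0 w2)).
        by rewrite /c; ring.
      by rewrite (Fsq _ _ n12) (Fsq _ _ n02) -/b; ring.
    have cn0 : c != 0.
      apply/eqP => c0; move: cc; rewrite c0 mulr0 => /eqP; rewrite eq_sym.
      by rewrite !mulf_eq0 (negbTE bn0).
    pose be := c / (b * b).
    have ben0 : be != 0 by rewrite mulf_neq0 ?invr_neq0.
    have be2 : be * be = b * b.
      by rewrite /be mulf_div cc mulfK // mulf_neq0.
    have key2 : c * be = b * b * (b * b).
      by rewrite /be mulrA cc [b * b * _]mulrC mulfK.
    exists al, be.
    pose e := fun i : 'I_d => if i == w0 then 1 else A w0 i / be.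
    have He i : e i * e i = 1.
      rewrite /e; case: eqP => [_|/eqP ni]; first by rewrite mulr1.
      by rewrite mulf_div (Fsq w0 i) ?be2 ?divff // eq_sym.
    apply: (assoc_sim (e := e) HA He); first exact: tr_toeplitz.
    move=> i j; rewrite mxE; case: (eqVneq i j) => [<-|nij].
      by rewrite He mul1r Fdiag.
    case: (eqVneq i w0) => [ei|ni0].
      subst i.
      have nj0 : j != w0 by rewrite eq_sym.
      by rewrite /e eqxx (negbTE nj0) mul1r divfK.
    case: (eqVneq j w0) => [ej|nj0].
      subst j.
      by rewrite /e eqxx (negbTE ni0) mulr1 divfK // Asym.
    have u : uniq [:: w0; i; j].
      by rewrite /= !inE negb_or !(eq_sym w0) ni0 nj0 nij.
    have F := F3 i j u.
    have hx : A w0 i * A w0 i = b * b by apply: Fsq; rewrite eq_sym.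
    have hy : A w0 j * A w0 j = b * b by apply: Fsq; rewrite eq_sym.
    have x0 : A w0 i != 0 by apply/eqP => z0; move: bb; rewrite -hx z0 mulr0 eqxx.
    have y0 : A w0 j != 0 by apply/eqP => z0; move: bb; rewrite -hy z0 mulr0 eqxx.
    have xy0 : A w0 i * A w0 j != 0 by rewrite mulf_neq0.
    rewrite /e (negbTE ni0) (negbTE nj0).
    have -> : A w0 i / be * (A w0 j / be) * be = A w0 i * A w0 j / be.
      by rewrite -mulrA divfK // mulrAC.
    apply: (mulIf ben0); rewrite divfK //.
    apply: (mulIf xy0).
    transitivity ((A w0 i * A i j * A w0 j) * be); first by ring.
    rewrite F key2.
    transitivity ((A w0 i * A w0 i) * (A w0 j * A w0 j)); first by rewrite hx hy.
    ring.
- move=> e2 al be H; split.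
  + apply: (assoc_sim (e := fun i : 'I_d => if i == w0 then 1 else -1) H).
    * by move=> i; case: ifP; rewrite ?mulr1 ?mulrNN ?mulr1.
    * exact: tr_toeplitz.
    move=> i j; rewrite !mxE; case: (eqVneq i j) => [->|nij].
      by case: ifP; rewrite ?mulr1 ?mulrNN ?mulr1 ?mul1r.
    move: (ltn_ord i) (ltn_ord j) nij; rewrite /w0; clear -e2.
    subst d; case: i => [[|[|?]] ?] //; case: j => [[|[|?]] ?] //= _ _ _.
      by rewrite mul1r mulN1r opprK.
    by rewrite mulr1 mulN1r opprK.
  + move=> be' H'; have q := Ube2 _ _ _ _ H H'.
    have : (be' - be) * (be' + be) = 0.
      by transitivity (be' * be' - be * be); [ring | rewrite q subrr].
    move/eqP; rewrite mulf_eq0 subr_eq0 addr_eq0 => /orP [/eqP|/eqP]; [left|right] => //.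
- exact: Ube3.
Qed.
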